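(* For $n\ge1$, the characteristic polynomial of the priority lattice $\Pi(n)$ is $\chi(\Pi(n),q)=q(q-1)^n$.
   Context: $[n]_0=\{0,\dots,n\}$. A priority forest on $[n]_0$ is a rooted forest with vertex set $[n]_0$ whose component trees $T_0,T_1,\dots$ are increasing (each non-root vertex has a larger label than its parent) and satisfy: for $j<k$ every label of $T_j$ is smaller than every label of $T_k$. The priority lattice $\Pi(n)$ is the set of priority forests on $[n]_0$, ordered by inclusion of edge sets, together with an extra top element $\hat1$; $\hat0$ is the edgeless forest. Its rank function is $\rho(P)=|E(P)|$ for priority forests and $\rho(\hat1)=n+1$. The characteristic polynomial is $\chi(\Pi(n),q)=\sum_{x\in\Pi(n)}\mu(\hat0,x)\,q^{\rho(\hat1)-\rho(x)}$, with $\mu$ the Möbius function of $\Pi(n)$. *)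

(* Defs.v *)
From HB Require Import structures.
From mathcomp Require Import all_boot all_order all_algebra.
Set Implicit Arguments. Unset Strict Implicit. Unset Printing Implicit Defensive.
Import GRing.Theory.

(* mu(x,x) = 1,  mu(x,y) = - sum_{x <= z < y} mu(x,z) for x < y,  0 otherwise.
   Defined by recursion with fuel; fuel #|T| suffices since every chain in T
   has at most #|T| - 1 steps. *)
Fixpoint mobius_fuel (T : finType) (le : rel T) (k : nat) (x y : T) : int :=
  match k with
  | 0 => ((x == y) : nat)%:Z
  | k'.+1 =>
      if x == y then 1%R
      else if le x y then
        (- \sum_(z : T | le x z && le z y && (z != y)) mobius_fuel le k' x z)%R
      else 0%R
  end.

Definition mobius (T : finType) (le : rel T) (x y : T) : int :=
  mobius_fuel le #|T| x y.

(* A rooted forest is encoded by its parent function: f i = Some j means that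
   j is the parent of i (edge {j,i}), f i = None means i is a root. *)
Definition forest_fun (n : nat) := {ffun 'I_n.+1 -> option 'I_n.+1}.

Definition up n (f : forest_fun n) (x : 'I_n.+1) : 'I_n.+1 :=
  if f x is Some p then p else x.

(* the root of the tree containing x (for increasing forests the depth is <= n) *)
Definition root_of n (f : forest_fun n) (x : 'I_n.+1) : 'I_n.+1 :=
  iter n.+1 (up f) x.

Definition increasing n (f : forest_fun n) : bool :=
  [forall i, if f i is Some j then (j < i)%N else true].

Definition priority_cond n (f : forest_fun n) : bool :=
  [forall x, forall y, (root_of f x < root_of f y)%N ==> (x < y)%N].

Definition is_priority n (f : forest_fun n) : bool :=
  increasing f && priority_cond f.

Definition pforest (n : nat) := {f : forest_fun n | is_priority f}.

Definition edges n (f : forest_fun n) : {set 'I_n.+1 * 'I_n.+1} :=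
  [set e | f e.2 == Some e.1].

(* Some P = the priority forest P ; None = the extra top element 1^ *)
Definition PL (n : nat) := option (pforest n).

Definition PL_le n : rel (PL n) := fun x y =>
  match x, y with
  | _, None => true
  | None, Some _ => false
  | Some P, Some Q => edges (val P) \subset edges (val Q)
  end.

Definition edgeless n : forest_fun n := [ffun => None].

Lemma edgeless_priority n : is_priority (edgeless n).
Proof.
apply/andP; split; first by apply/forallP => i; rewrite ffunE.
apply/forallP => x; apply/forallP => y; apply/implyP.
have rootE z : root_of (edgeless n) z = z.
  rewrite /root_of; set g := up _.
  have gz : g z = z by rewrite /g /up ffunE.
  have h k : iter k g z = z by elim: k => //= k ->.
  exact: h.
by rewrite !rootE.
Qed.

Definition PL_bot n : PL n := Some (exist _ (edgeless n) (edgeless_priority n)).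

Definition PL_rank n (x : PL n) : nat :=
  match x with
  | None => n.+1
  | Some P => #|edges (val P)|
  end.

Definition char_poly_PL (n : nat) : {poly int} :=
  \sum_(x : PL n) (mobius (@PL_le n) (PL_bot n) x)%:P
                   * 'X^(PL_rank (None : PL n) - PL_rank x).

(* Main.v *)
Require Import Defs.
From mathcomp Require Import all_boot all_order all_algebra.
From mathcomp Require Import zify.
Import GRing.Theory.
Local Open Scope ring_scope.
Set Implicit Arguments. Unset Strict Implicit. Unset Printing Implicit Defensive.

Lemma big_opt (T : finType) (R : nmodType) (F : option T -> R) :
  \sum_(x : option T) F x = F None + \sum_(t : T) F (Some t).
Proof.
rewrite (bigD1 None) //=; congr (_ + _).
rewrite (reindex_omap Some (fun x => x)) //=; last by move=> [t|].
by apply: eq_bigl => j; rewrite eqxx.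
Qed.

Section Forests.
Variable n : nat.
Implicit Types f g : forest_fun n.

Lemma edges_subP f g :
  reflect (forall c p, f c = Some p -> g c = Some p) (edges f \subset edges g).
Proof.
apply: (iffP subsetP) => [H c p fc | H [p c]].
  by move: (H (p, c)); rewrite !inE /= fc eqxx => /(_ isT)/eqP.
by rewrite !inE /= => /eqP /H ->.
Qed.

Lemma edges_inj : injective (@edges n).
Proof.
move=> f g e; apply/ffunP => c.
case fc: (f c) => [p|].
  have: (p, c) \in edges g by rewrite -e inE fc.
  by rewrite inE => /eqP.
case gc: (g c) => [p|] //.
have: (p, c) \in edges f by rewrite e inE gc.
by rewrite inE fc.
Qed.

Lemma inc_lt f c p : increasing f -> f c = Some p -> (p < c)%N.
Proof. by move=> /forallP /(_ c) + fc; rewrite fc. Qed.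

Lemma inc_ord0 f : increasing f -> f ord0 = None.
Proof. by move=> inc; case e: (f ord0) => [p|] //; move: (inc_lt inc e). Qed.

Lemma card_edges f : #|edges f| = #|[set c | f c != None]|.
Proof.
have E : snd @: edges f = [set c | f c != None].
  apply/setP => c; rewrite inE.
  apply/imsetP/idP => [[[p c'] /= ] | ].
    by rewrite inE /= => /eqP e ->; rewrite e.
  case e: (f c) => [p|] // _; exists (p, c) => //; by rewrite inE e.
rewrite -E card_in_imset //.
move=> [p1 c1] [p2 c2]; rewrite !inE /= => /eqP e1 /eqP e2 ec.
by rewrite ec e2 in e1; case: e1 => ->; rewrite ec.
Qed.

Lemma card_edges_le f : increasing f -> (#|edges f| <= n)%N.
Proof.
move=> inc; rewrite card_edges.
have E : #|[set~ (ord0 : 'I_n.+1)]| = n by rewrite cardsC1 card_ord.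
rewrite -[X in (_ <= X)%N]E.
apply: subset_leq_card; apply/subsetP => c; rewrite !inE; apply: contra.
by move/eqP->; rewrite inc_ord0.
Qed.

Lemma root_none f x : increasing f -> f (root_of f x) = None.
Proof.
move=> inc.
have H k : f (iter k (up f) x) = None \/ (iter k (up f) x + k <= x)%N.
  elim: k => [|k IH]; first by right; rewrite addn0.
  rewrite iterS /up; case e: (f (iter k (up f) x)) => [p|]; last by left.
  case: IH => [|IH]; first by rewrite e.
  right; have := inc_lt inc e; move: IH; rewrite addnS; lia.
case: (H n.+1) => // h; have := ltn_ord x; lia.
Qed.

Definition pathb f := [forall c, if f c is Some p then (p.+1 == c)%N else true].

Lemma path_priority f : increasing f -> pathb f -> is_priority f.
Proof.
move=> inc pb; apply/andP; split => //.
have H x k : (iter k (up f) x <= x)%N /\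
    forall z : 'I_n.+1, (iter k (up f) x < z <= x)%N -> f z != None.
  elim: k => [|k [IH1 IH2]] /=; first by split => // z; lia.
  rewrite {1 3}/up; case e: (f (iter k (up f) x)) => [p|]; last by split.
  have := forallP pb (iter k (up f) x); rewrite e => /eqP ep.
  split; first by move: IH1; lia.
  move=> z hz; case: (ltngtP (iter k (up f) x) z) => hz'.
  - by apply: IH2; move: hz hz'; lia.
  - by move: hz hz'; lia.
  - by rewrite -(val_inj hz') e.
apply/forallP => x; apply/forallP => y; apply/implyP => hr.
rewrite ltnNge; apply/negP => hyx.
have [_ Hx] := H x n.+1.
have [Hy _] := H y n.+1.
have := Hx (root_of f y); rewrite -/(root_of f x) -/(root_of f y) root_none //.
by rewrite hr /= (leq_trans Hy hyx) => /(_ isT).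
Qed.

Definition mkpath (S : {set 'I_n}) : forest_fun n :=
  [ffun c => if unlift ord0 c is Some i then
               (if i \in S then Some (widen_ord (leqnSn n) i) else None)
             else None].

Lemma mkpath_lift S i :
  mkpath S (lift ord0 i) = if i \in S then Some (widen_ord (leqnSn n) i) else None.
Proof. by rewrite ffunE liftK. Qed.

Lemma mkpath0 S : mkpath S ord0 = None.
Proof. by rewrite ffunE unlift_none. Qed.

Lemma mkpath_inc S : increasing (mkpath S).
Proof.
apply/forallP => c; case: (unliftP ord0 c) => [i ->|->]; last by rewrite mkpath0.
by rewrite mkpath_lift; case: (i \in S) => //=; rewrite /bump /=.
Qed.

Lemma mkpath_path S : pathb (mkpath S).
Proof.
apply/forallP => c; case: (unliftP ord0 c) => [i ->|->]; last by rewrite mkpath0.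
by rewrite mkpath_lift; case: (i \in S) => //=; rewrite /bump /=.
Qed.

Lemma mkpath_prio S : is_priority (mkpath S).
Proof. exact: path_priority (mkpath_inc S) (mkpath_path S). Qed.

Definition mkpathP S : pforest n := exist _ (mkpath S) (mkpath_prio S).

Definition pathset f : {set 'I_n} := [set i | f (lift ord0 i) != None].

Lemma mkpathK S : pathset (mkpath S) = S.
Proof. by apply/setP => i; rewrite inE mkpath_lift; case: (i \in S). Qed.

Lemma pathsetK f : increasing f -> pathb f -> mkpath (pathset f) = f.
Proof.
move=> inc pb; apply/ffunP => c.
case: (unliftP ord0 c) => [i ->|->]; last by rewrite mkpath0 inc_ord0.
rewrite mkpath_lift inE; case e: (f (lift ord0 i)) => [p|] //=.
have := forallP pb (lift ord0 i); rewrite e /= /bump /= => /eqP [ep].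
by congr Some; apply: val_inj; rewrite /= ep.
Qed.

Lemma card_mkpath S : #|edges (mkpath S)| = #|S|.
Proof.
have E : [set c | mkpath S c != None] = lift ord0 @: S.
  apply/setP => c; rewrite inE.
  case: (unliftP ord0 c) => [i ->|->].
    by rewrite mkpath_lift mem_imset; [case: (i \in S) | exact: lift_inj].
  rewrite mkpath0 /=; apply/esym/negP => /imsetP [i _] /eqP.
  by rewrite (negbTE (neq_lift _ _)).
by rewrite card_edges E card_imset //; exact: lift_inj.
Qed.

Definition Aset f : {set 'I_n} :=
  [set i | f (lift ord0 i) == Some (widen_ord (leqnSn n) i)].

Lemma mkpath_sub S f : (edges (mkpath S) \subset edges f) = (S \subset Aset f).
Proof.
apply/edges_subP/subsetP => [H i iS | H c p].
  by rewrite inE (H (lift ord0 i) (widen_ord (leqnSn n) i)) // mkpath_lift iS.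
case: (unliftP ord0 c) => [i ->|->]; last by rewrite mkpath0.
rewrite mkpath_lift; case iS: (i \in S) => //; case=> <-.
by have := H i iS; rewrite inE => /eqP.
Qed.

End Forests.

Lemma sign_sum (R : comRingType) (I : finType) (A : {set I}) (x y : R) :
  \prod_(i : I) (if i \in A then x + y else y) =
  \sum_(S : {set I} | S \subset A) x ^+ #|S| * y ^+ (#|I| - #|S|).
Proof.
have -> : \prod_(i : I) (if i \in A then x + y else y) =
          \prod_(i : I) ((if i \in A then x else 0) + y).
  by apply: eq_bigr => i _; case: (i \in A); rewrite ?add0r.
rewrite bigA_distr [RHS]big_mkcond; apply: eq_big => // S _.
case: (boolP (S \subset A)) => sub.
  rewrite (bigID (mem S)) /=.
  rewrite [X in X * _](eq_bigr (fun => x)); last by move=> i iS; rewrite iS (subsetP sub).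
  rewrite [X in _ * X](eq_bigr (fun => y)); last by move=> i /negbTE ->.
  rewrite !prodr_const; congr (_ * _ ^+ _).
  by rewrite -(cardsC S) addKn; apply: eq_card => i; rewrite !inE.
have [i iS iA] : exists2 i, i \in S & i \notin A.
  by move/subsetPn: sub => [i iS iA]; exists i.
by rewrite (bigD1 i) //= iS (negbTE iA) mul0r.
Qed.

Lemma iter_fix (T : Type) (g : T -> T) x k : g x = x -> iter k g x = x.
Proof. by move=> gx; elim: k => //= k ->. Qed.

Lemma Aset_nonempty n (f : forest_fun n) :
  is_priority f -> f != edgeless n -> exists i, i \in Aset f.
Proof.
move=> /andP [inc pc] ne.
have [c0 hc0] : exists c, f c != None.
  apply/existsP; apply: contraR ne => /existsPn H; apply/eqP/ffunP => c.
  by rewrite ffunE; move: (H c); case: (f c).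
case: (@arg_minnP _ c0 (fun c => f c != None) (fun c : 'I_n.+1 => nat_of_ord c) hc0) => c hc cmin.
case e: (f c) => [p|]; last by rewrite e in hc.
have plt := inc_lt inc e.
have pn : f p = None.
  case fp: (f p) => [q|] //; have := cmin p; rewrite fp => /(_ isT) h; exfalso; lia.
have pc1 : p.+1 = c.
  apply/eqP; rewrite eqn_leq plt /= leqNgt; apply/negP => hlt.
  have dlt : (c.-1 < n.+1)%N by have := ltn_ord c; lia.
  pose d : 'I_n.+1 := Ordinal dlt.
  have dn : f d = None.
    case fd: (f d) => [q|] //; have := cmin d; rewrite fd => /(_ isT) /=; lia.
  have rc : root_of f c = p.
    by rewrite /root_of iterSr {2}/up e iter_fix // /up pn.
  have rd : root_of f d = d by rewrite /root_of iter_fix // /up dn.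
  have := implyP (forallP (forallP pc c) d); rewrite rc rd /=.
  have -> : (p < c.-1)%N by lia.
  by move=> /(_ isT); lia.
case: (unliftP ord0 c) e pc1 => [i ->|->] e pc1; last by [].
exists i; rewrite inE e; apply/eqP; congr Some; apply: val_inj => /=.
by move: pc1; rewrite /= /bump /=; lia.
Qed.

Definition gP n (P : pforest n) : int :=
  if pathb (val P) then (-1) ^+ #|edges (val P)| else 0.

Lemma sum_paths n (R : nmodType) (C : pred (pforest n)) (F : nat -> R) :
  \sum_(Q : pforest n | C Q) (if pathb (val Q) then F #|edges (val Q)| else 0)
  = \sum_(S : {set 'I_n} | C (mkpathP S)) F #|S|.
Proof.
rewrite -big_mkcondr.
rewrite (reindex_onto (@mkpathP n) (fun Q => pathset (val Q))).
  apply: eq_big => [S|S _]; last by rewrite card_mkpath.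
  by rewrite /= mkpath_path mkpathK eqxx !andbT.
move=> Q /andP [_ pb]; apply: val_inj => /=.
by apply: pathsetK pb; case/andP: (valP Q).
Qed.

Lemma edges_edgeless n : edges (edgeless n) = set0.
Proof. by apply/setP => e; rewrite !inE ffunE. Qed.

Lemma sumA n (P : pforest n) : val P != edgeless n ->
  \sum_(Q : pforest n | edges (val Q) \subset edges (val P)) gP Q = 0.
Proof.
move=> ne; have [i0 hi0] := Aset_nonempty (valP P) ne.
rewrite /gP (sum_paths (fun Q => edges (val Q) \subset edges (val P))
                       (fun k => (-1) ^+ k : int)) /=.
transitivity (\sum_(S : {set 'I_n} | S \subset Aset (val P)) (-1) ^+ #|S| * 1 ^+ (#|'I_n| - #|S|) : int).
  by apply: eq_big => [S|S _]; [rewrite mkpath_sub | rewrite expr1n mulr1].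
by rewrite -sign_sum (bigD1 i0) //= hi0 addNr mul0r.
Qed.

Lemma mob_fuel n k (P : pforest n) : (#|edges (val P)| < k)%N ->
  mobius_fuel (@PL_le n) k (PL_bot n) (Some P) = gP P.
Proof.
elim: k P => [//|k IH] P hk /=.
case: eqP => [E|NE].
  rewrite /PL_bot in E; case: E => <-.
  rewrite /gP /= edges_edgeless cards0 expr0.
  by have -> : pathb (edgeless n) by apply/forallP => c; rewrite ffunE.
rewrite /PL_bot /= edges_edgeless sub0set.
have ne : val P != edgeless n.
  apply: contra_not_neq NE => EP; rewrite /PL_bot; congr Some.
  by apply: val_inj; rewrite /= EP.
have := sumA ne; rewrite (bigD1 P) //= => /eqP; rewrite addr_eq0 => /eqP ->.
congr (- _).
rewrite big_mkcond big_opt /= add0r [RHS]big_mkcond; apply: eq_bigr => Q _ /=.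
rewrite sub0set /=.
have -> : (Some Q != Some P) = (Q != P) by [].
case: ifP => // /andP [sub neq]; rewrite -/(PL_bot n); apply: IH.
have pr : edges (val Q) \proper edges (val P).
  rewrite properEneq sub andbT; apply: contra neq => /eqP /edges_inj EQ.
  by apply/eqP; apply: val_inj.
by apply: leq_trans (proper_card pr) _; rewrite -ltnS.
Qed.

Lemma card_pforest n : (n < #|{: pforest n}|)%N.
Proof.
apply: (leq_trans (ltn_expl n (isT : (1 < 2)%N))).
have -> : (2 ^ n = #|powerset [set: 'I_n]|)%N by rewrite card_powerset cardsT card_ord.
apply: (leq_trans (max_card _)).
apply: (@leq_card _ _ (@mkpathP n)) => S1 S2 /(congr1 val) /= E.
by rewrite -(mkpathK S1) E mkpathK.
Qed.

Lemma mob_top n : mobius (@PL_le n) (PL_bot n) None = - \sum_(P : pforest n) gP P.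
Proof.
rewrite /mobius card_option /PL_bot /=.
congr (- _).
rewrite big_mkcond big_opt /= add0r; apply: eq_bigr => Q _ /=.
rewrite edges_edgeless sub0set /=; apply: mob_fuel.
exact: leq_ltn_trans (card_edges_le (proj1 (andP (valP Q)))) (card_pforest n).
Qed.

Lemma mob_some n (P : pforest n) : mobius (@PL_le n) (PL_bot n) (Some P) = gP P.
Proof.
rewrite /mobius card_option; apply: mob_fuel; rewrite ltnS.
exact: leq_trans (card_edges_le (proj1 (andP (valP P)))) (ltnW (card_pforest n)).
Qed.

Lemma sum_gP n : (1 <= n)%N -> \sum_(P : pforest n) gP P = 0.
Proof.
move=> n1; rewrite /gP (sum_paths xpredT (fun k => (-1) ^+ k : int)) /=.
transitivity (\sum_(S : {set 'I_n} | S \subset setT) (-1) ^+ #|S| * 1 ^+ (#|'I_n| - #|S|) : int).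
  by apply: eq_big => [S|S _]; [rewrite subsetT | rewrite expr1n mulr1].
rewrite -sign_sum (bigD1 (Ordinal n1)) //= in_setT addNr mul0r //.
Qed.

Theorem corollary5p16 (n : nat) :
  (1 <= n)%N -> char_poly_PL n = 'X * ('X - 1) ^+ n.
Proof.
move=> n1; rewrite /char_poly_PL big_opt mob_top sum_gP // oppr0 /= subnn expr0 mulr1 add0r.
transitivity (\sum_(P : pforest n)
   (if pathb (val P) then (fun k => ((-1) ^+ k : int)%:P * 'X^(n.+1 - k)) #|edges (val P)| else 0)).
  apply: eq_bigr => P _; rewrite /gP; rewrite mob_some /gP; case: ifP => //= _; by rewrite ?polyC0 mul0r.
rewrite (sum_paths xpredT (fun k => ((-1) ^+ k : int)%:P * 'X^(n.+1 - k))) /=.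
have -> : ('X - 1 : {poly int}) ^+ n = \prod_(i : 'I_n) (if i \in [set: 'I_n] then -1 + 'X else 'X).
  rewrite (eq_bigr (fun => 'X - 1)); last by move=> i _; rewrite in_setT addrC.
  by rewrite prodr_const cardT size_enum_ord.
rewrite sign_sum mulr_sumr; apply: eq_big => [S|S _]; first by rewrite subsetT.
have hS : (#|S| <= n)%N by have := max_card (mem S); rewrite card_ord.
by rewrite card_ord subSn // exprS rmorphXn /= polyCN polyC1 mulrCA.
Qed.
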